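(* The category of domain-complete spaces with continuous maps, and the category of LCS-complete spaces with continuous maps, do not have all coequalizers: in each of them there is a pair of parallel morphisms with no coequalizer.
   Context: A space is domain-complete (resp. LCS-complete) if it is homeomorphic to a $G_\delta$ subset (countable intersection of open sets), with the subspace topology, of some continuous dcpo with its Scott topology (resp. of some locally compact sober space, locally compact meaning every point has a neighborhood base of compact saturated sets). *)

(* Defs.v *)
From Stdlib Require Import List.

Set Implicit Arguments.

Record Top := MkTop {
  carrier :> Type;
  open : (carrier -> Prop) -> Prop;
  open_full : open (fun _ => True);
  open_inter : forall U V, open U -> open V -> open (fun x => U x /\ V x);
  open_union : forall F : (carrier -> Prop) -> Prop,
      (forall U, F U -> open U) -> open (fun x => exists U, F U /\ U x)
}.

Definition continuous {X Y : Top} (f : X -> Y) : Prop :=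
  forall V, open Y V -> open X (fun x => V (f x)).

Definition homeomorphic (X Y : Top) : Prop :=
  exists (h : X -> Y) (k : Y -> X),
    continuous h /\ continuous k /\
    (forall x, k (h x) = x) /\ (forall y, h (k y) = y).

Section Subspace.
Variables (X : Top) (G : X -> Prop).
Definition sub_open (V : {x : X | G x} -> Prop) : Prop :=
  exists U, open X U /\ forall z, V z <-> U (proj1_sig z).

Lemma sub_open_full : sub_open (fun _ => True).
Proof. exists (fun _ => True); split; [apply open_full | tauto]. Qed.

Lemma sub_open_inter U V : sub_open U -> sub_open V -> sub_open (fun x => U x /\ V x).
Proof.
  intros [U' [HU HU']] [V' [HV HV']]. exists (fun x => U' x /\ V' x).
  split; [apply open_inter; assumption|]. intros z. rewrite HU', HV'. tauto.
Qed.

Lemma sub_open_union (F : ({x : X | G x} -> Prop) -> Prop) :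
  (forall U, F U -> sub_open U) -> sub_open (fun x => exists U, F U /\ U x).
Proof.
  intros HF.
  exists (fun x => exists U', (open X U' /\ exists V, F V /\ forall z, V z <-> U' (proj1_sig z)) /\ U' x).
  split.
  - apply (@open_union X (fun U' => open X U' /\ exists V, F V /\ forall z, V z <-> U' (proj1_sig z))).
    tauto.
  - intros z; split.
    + intros [V [FV Vz]]. destruct (HF V FV) as [U' [HU' HVU]].
      exists U'. split; [split; [assumption| exists V; split; assumption]|]. apply HVU; assumption.
    + intros [U' [[_ [V [FV HVU]]] Uz]]. exists V. split; [assumption|]. apply HVU; assumption.
Qed.

Definition subspace : Top :=
  @MkTop {x : X | G x} sub_open sub_open_full sub_open_inter sub_open_union.
End Subspace.

Definition G_delta {X : Top} (G : X -> Prop) : Prop :=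
  exists U : nat -> X -> Prop, (forall n, open X (U n)) /\
    forall x, G x <-> (forall n, U n x).

Section Order.
Variables (D : Type) (le : D -> D -> Prop).

Definition directed (S : D -> Prop) : Prop :=
  (exists s, S s) /\
  forall a b, S a -> S b -> exists c, S c /\ le a c /\ le b c.

Definition is_lub (S : D -> Prop) (x : D) : Prop :=
  (forall s, S s -> le s x) /\ (forall y, (forall s, S s -> le s y) -> le x y).

Definition is_dcpo : Prop :=
  (forall x, le x x) /\
  (forall x y z, le x y -> le y z -> le x z) /\
  (forall x y, le x y -> le y x -> x = y) /\
  (forall S, directed S -> exists x, is_lub S x).

Definition way_below (x y : D) : Prop :=
  forall S s, directed S -> is_lub S s -> le y s -> exists d, S d /\ le x d.

Definition continuous_dcpo : Prop :=
  is_dcpo /\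
  forall x, directed (fun y => way_below y x) /\ is_lub (fun y => way_below y x) x.

Definition scott_open (U : D -> Prop) : Prop :=
  (forall x y, U x -> le x y -> U y) /\
  (forall S s, directed S -> is_lub S s -> U s -> exists d, S d /\ U d).

Lemma scott_open_full : scott_open (fun _ => True).
Proof.
  split; [tauto|]. intros S s [[d Sd] _] _ _. exists d; tauto.
Qed.

Lemma scott_open_inter U V : scott_open U -> scott_open V ->
  scott_open (fun x => U x /\ V x).
Proof.
  intros [U1 U2] [V1 V2]. split.
  - intros x y [Ux Vx] Hxy. split; [eapply U1|eapply V1]; eassumption.
  - intros S s HS Hs [Us Vs].
    destruct (U2 S s HS Hs Us) as [a [Sa Ua]].
    destruct (V2 S s HS Hs Vs) as [b [Sb Vb]].
    destruct HS as [_ HS]. destruct (HS a b Sa Sb) as [c [Sc [Hac Hbc]]].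
    exists c. split; [assumption|]. split; [eapply U1|eapply V1]; eassumption.
Qed.

Lemma scott_open_union (F : (D -> Prop) -> Prop) :
  (forall U, F U -> scott_open U) -> scott_open (fun x => exists U, F U /\ U x).
Proof.
  intros HF. split.
  - intros x y [U [FU Ux]] Hxy. exists U. split; [assumption|].
    destruct (HF U FU) as [H1 _]. eapply H1; eassumption.
  - intros S s HS Hs [U [FU Us]]. destruct (HF U FU) as [_ H2].
    destruct (H2 S s HS Hs Us) as [d [Sd Ud]]. exists d. split; [assumption|].
    exists U; tauto.
Qed.

Definition scott_space : Top :=
  @MkTop D scott_open scott_open_full scott_open_inter scott_open_union.
End Order.

Section SoberLC.
Variable X : Top.

Definition closed (C : X -> Prop) : Prop := open X (fun x => ~ C x).

Definition point_closure (x : X) : X -> Prop :=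
  fun y => forall U, open X U -> U y -> U x.

Definition irreducible_closed (C : X -> Prop) : Prop :=
  closed C /\ (exists x, C x) /\
  forall C1 C2, closed C1 -> closed C2 -> (forall x, C x -> C1 x \/ C2 x) ->
    (forall x, C x -> C1 x) \/ (forall x, C x -> C2 x).

Definition sober : Prop :=
  forall C, irreducible_closed C ->
    exists x, (forall y, C y <-> point_closure x y) /\
      forall x', (forall y, C y <-> point_closure x' y) -> x' = x.

Definition compact (K : X -> Prop) : Prop :=
  forall F : (X -> Prop) -> Prop, (forall U, F U -> open X U) ->
    (forall x, K x -> exists U, F U /\ U x) ->
    exists l : list (X -> Prop), (forall U, In U l -> F U) /\
      forall x, K x -> exists U, In U l /\ U x.

Definition saturated (K : X -> Prop) : Prop :=
  forall x, (forall U, open X U -> (forall y, K y -> U y) -> U x) -> K x.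

Definition locally_compact : Prop :=
  forall x U, open X U -> U x ->
    exists K V, compact K /\ saturated K /\ open X V /\ V x /\
      (forall y, V y -> K y) /\ (forall y, K y -> U y).
End SoberLC.

Definition domain_complete (X : Top) : Prop :=
  exists (D : Type) (le : D -> D -> Prop),
    continuous_dcpo le /\
    exists G : scott_space le -> Prop,
      G_delta G /\ homeomorphic X (@subspace _ G).

Definition LCS_complete (X : Top) : Prop :=
  exists Y : Top, sober Y /\ locally_compact Y /\
    exists G : Y -> Prop, G_delta G /\ homeomorphic X (@subspace _ G).

(** * Coequalizers in the full subcategory of Top on objects satisfying P *)
Definition is_coequalizer (P : Top -> Prop) {X Y : Top} (f g : X -> Y)
    (Q : Top) (q : Y -> Q) : Prop :=
  P Q /\ continuous q /\ (forall x, q (f x) = q (g x)) /\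
  forall (Z : Top) (h : Y -> Z), P Z -> continuous h ->
    (forall x, h (f x) = h (g x)) ->
    exists u : Q -> Z, continuous u /\ (forall y, u (q y) = h y) /\
      forall u' : Q -> Z, continuous u' -> (forall y, u' (q y) = h y) ->
        forall z, u' z = u z.

Definition lacks_some_coequalizer (P : Top -> Prop) : Prop :=
  exists (X Y : Top) (f g : X -> Y),
    P X /\ P Y /\ continuous f /\ continuous g /\
    ~ (exists (Q : Top) (q : Y -> Q), @is_coequalizer P X Y f g Q q).

(* Main.v *)
From Stdlib Require Import List Classical ClassicalEpsilon FunctionalExtensionality PropExtensionality ProofIrrelevance Lia Arith.
From mathcomp.classical Require classical_sets.
Require Import Defs.

Lemma open_ext (X : Top) (A B : X -> Prop) : (forall x, A x <-> B x) -> open X A -> open X B.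
Proof.
  intros H HA. replace B with A; [exact HA|].
  apply functional_extensionality; intros x; apply propositional_extensionality; apply H.
Qed.

Lemma open_empty (X : Top) : open X (fun _ => False).
Proof.
  eapply open_ext; [|apply (@open_union X (fun _ => False)); tauto].
  intros x; simpl; firstorder.
Qed.

Lemma open_or (X : Top) (A B : X -> Prop) : open X A -> open X B -> open X (fun x => A x \/ B x).
Proof.
  intros HA HB.
  eapply open_ext; [|apply (@open_union X (fun U => U = A \/ U = B))].
  - intros x; split.
    + intros [U [[-> | ->] Ux]]; tauto.
    + intros [Ax|Bx]; [exists A|exists B]; tauto.
  - intros U [-> | ->]; assumption.
Qed.

Lemma dep_seq (A : Type) (P : A -> Prop) (R : nat -> A -> A -> Prop) :
  (forall k a, P a -> exists b, P b /\ R k a b) ->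
  forall a0, P a0 -> exists f : nat -> A, f 0 = a0 /\ forall k, P (f k) /\ R k (f k) (f (S k)).
Proof.
  intros H a0 P0.
  assert (st : forall k (a : {a | P a}), {b : {b | P b} | R k (proj1_sig a) (proj1_sig b)}).
  { intros k [a Pa]. destruct (constructive_indefinite_description _ (H k a Pa)) as [b [Pb Rb]].
    exists (exist _ b Pb). exact Rb. }
  set (g := fix g (k : nat) : {a | P a} := match k with 0 => exist _ a0 P0 | S k' => proj1_sig (st k' (g k')) end).
  exists (fun k => proj1_sig (g k)). split; [reflexivity|].
  intros k. split; [exact (proj2_sig (g k))|].
  simpl. exact (proj2_sig (st k (g k))).
Qed.

(** * Domain theory *)
Section Dom.
Variables (D : Type) (le : D -> D -> Prop).
Hypothesis Hc : continuous_dcpo le.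
Notation wb := (way_below le).

Lemma le_refl x : le x x. Proof. destruct Hc as [[H _] _]; apply H. Qed.
Lemma le_trans x y z : le x y -> le y z -> le x z.
Proof. destruct Hc as [[_ [H _]] _]; apply H. Qed.

Lemma directed_single x : directed le (fun y => y = x).
Proof. split; [exists x; reflexivity|]. intros a b -> ->. exists x; split; [reflexivity|split; apply le_refl]. Qed.

Lemma wb_le x y : wb x y -> le x y.
Proof.
  intros H. destruct (H (fun z => z = y) y (directed_single y)) as [d [-> Hd]]; [|apply le_refl|exact Hd].
  split; [intros s ->; apply le_refl|intros z Hz; apply Hz; reflexivity].
Qed.

Lemma le_wb x y z : le x y -> wb y z -> wb x z.
Proof.
  intros Hxy Hyz S s HS Hs Hzs. destruct (Hyz S s HS Hs Hzs) as [d [Sd Hd]].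
  exists d; split; [exact Sd|eapply le_trans; eassumption].
Qed.

Lemma wb_le' x y z : wb x y -> le y z -> wb x z.
Proof.
  intros Hxy Hyz S s HS Hs Hzs. apply (Hxy S s HS Hs). eapply le_trans; eassumption.
Qed.

Lemma approx x : directed le (fun y => wb y x) /\ is_lub le (fun y => wb y x) x.
Proof. destruct Hc as [_ H]; apply H. Qed.

Lemma interp a y : wb a y -> exists b, wb a b /\ wb b y.
Proof.
  intros Hay.
  set (S := fun b => exists c, wb b c /\ wb c y).
  assert (HS : directed le S).
  { split.
    - destruct (approx y) as [[[c Hc1] _] _]. destruct (approx c) as [[[b Hb] _] _].
      exists b, c; tauto.
    - intros b1 b2 [c1 [H1 H1']] [c2 [H2 H2']].
      destruct (approx y) as [[_ Hd] _]. destruct (Hd c1 c2 H1' H2') as [c [Hc1 [Hl1 Hl2]]].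
      destruct (approx c) as [[_ Hd'] [_ _]].
      assert (Hcl := proj2 (approx c)).
      destruct (H1 (fun z => wb z c) c (proj1 (approx c)) Hcl Hl1) as [d1 [Hd1 Hbd1]].
      destruct (H2 (fun z => wb z c) c (proj1 (approx c)) Hcl Hl2) as [d2 [Hd2 Hbd2]].
      destruct (Hd' d1 d2 Hd1 Hd2) as [e [He [He1 He2]]].
      exists e. split; [exists c; tauto|]. split; eapply le_trans; eassumption. }
  assert (Hl : is_lub le S y).
  { split.
    - intros b [c [Hb Hc']]. eapply le_trans; apply wb_le; eassumption.
    - intros z Hz. destruct (approx y) as [_ [_ Hy]]. apply Hy. intros c Hcy.
      destruct (approx c) as [_ [_ Hc']]. apply Hc'. intros b Hb. apply Hz. exists c; tauto. }
  destruct (Hay S y HS Hl (le_refl y)) as [b [[c [Hbc Hcy]] Hab]].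
  exists c. split; [eapply le_wb; eassumption|exact Hcy].
Qed.

Lemma wb_open a : scott_open le (fun y => wb a y).
Proof.
  split.
  - intros x y H H'. eapply wb_le'; eassumption.
  - intros S s HS Hs Has. destruct (interp a s Has) as [b [Hab Hbs]].
    destruct (Hbs S s HS Hs (le_refl s)) as [d [Sd Hbd]].
    exists d. split; [exact Sd|eapply wb_le'; eassumption].
Qed.

Lemma approx_open U x : scott_open le U -> U x -> exists b, wb b x /\ U b.
Proof.
  intros [_ HU] Ux. destruct (approx x) as [Hd Hl]. destruct (HU _ x Hd Hl Ux) as [d [Hd1 Hd2]].
  exists d; tauto.
Qed.

Lemma dom_baire (Uo W : nat -> D -> Prop) :
  (forall n, scott_open le (Uo n)) -> (forall k, scott_open le (W k)) ->
  (forall k O, scott_open le O -> (exists g, (forall n, Uo n g) /\ O g) ->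
      exists g, (forall n, Uo n g) /\ O g /\ W k g) ->
  (exists g, forall n, Uo n g) ->
  exists x, (forall n, Uo n x) /\ forall k, W k x.
Proof.
  intros HU HW Hdense [g0 Hg0].
  set (P := fun a => exists g, (forall n, Uo n g) /\ wb a g).
  set (R := fun k a b => wb a b /\ W k b /\ Uo k b).
  assert (Hstep : forall k a, P a -> exists b, P b /\ R k a b).
  { intros k a [g [Gg Hag]].
    destruct (Hdense k (fun y => wb a y) (wb_open a)) as [g' [Gg' [Hag' Wg']]]; [exists g; tauto|].
    assert (Ho : scott_open le (fun y => wb a y /\ W k y /\ Uo k y)).
    { apply scott_open_inter; [apply wb_open|apply scott_open_inter; auto]. }
    destruct (approx_open _ g' Ho) as [b [Hbg [Hab [Wb Ub]]]]; [auto|].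
    exists b. split; [exists g'; tauto|unfold R; tauto]. }
  destruct (approx g0) as [[[a0 Ha0] _] _].
  destruct (dep_seq _ P R Hstep a0) as [f [_ Hf]]; [exists g0; tauto|].
  assert (Hch : forall i j, i <= j -> le (f i) (f j)).
  { intros i j Hij. induction Hij; [apply le_refl|].
    eapply le_trans; [exact IHHij|apply wb_le; apply (Hf m)]. }
  assert (HS : directed le (fun x => exists i, x = f i)).
  { split; [exists (f 0); exists 0; reflexivity|].
    intros a b [i ->] [j ->]. exists (f (max i j)). split; [exists (max i j); reflexivity|].
    split; apply Hch; lia. }
  destruct Hc as [[_ [_ [_ Hlub]]] _].
  destruct (Hlub _ HS) as [s [Hs1 Hs2]].
  exists s. split.
  - intros n. destruct (HU n) as [Hup _]. apply (Hup (f (S n))); [apply (Hf n)|apply Hs1; exists (S n); reflexivity].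
  - intros k. destruct (HW k) as [Hup _]. apply (Hup (f (S k))); [apply (Hf k)|apply Hs1; exists (S k); reflexivity].
Qed.
End Dom.

Lemma zorn_union (T : Type) (P : (T -> Prop) -> Prop) :
  (forall F : (T -> Prop) -> Prop, (forall A, F A -> P A) ->
     (forall A B, F A -> F B -> (forall x, A x -> B x) \/ (forall x, B x -> A x)) ->
     P (fun x => exists A, F A /\ A x)) ->
  exists A, P A /\ forall B, P B -> (forall x, A x -> B x) -> forall x, B x -> A x.
Proof.
  intros H.
  destruct (@classical_sets.Zorn_bigcup T P) as [A [PA HA]].
  - intros F FP Ftot.
    assert (E : classical_sets.bigcup F (fun X => X) = (fun x => exists A, F A /\ A x)).
    { apply functional_extensionality; intros x; apply propositional_extensionality.
      unfold classical_sets.bigcup; split; [intros [X ? ?]; eauto | intros [X [? ?]]; econstructor; eauto]. }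
    rewrite E. apply H; [exact FP|]. intros A B FA FB. exact (Ftot A B FA FB).
  - exists A; split; [exact PA|]. intros B PB AB x Bx.
    apply NNPP; intros nA. apply (HA B); [split; [exact AB|]|exact PB].
    intros BA. apply nA, BA, Bx.
Qed.

Definition baire (Q : Top) : Prop :=
  forall V : nat -> Q -> Prop, (forall k, open Q (V k)) ->
  (forall k O, open Q O -> (exists z, O z) -> exists z, O z /\ V k z) ->
  (exists z : Q, True) -> exists z, forall k, V k z.

Lemma baire_transfer (Q Y : Top) (G : Y -> Prop) :
  homeomorphic Q (@subspace _ G) ->
  (forall W : nat -> Y -> Prop, (forall k, open Y (W k)) ->
     (forall k O, open Y O -> (exists g, G g /\ O g) -> exists g, G g /\ O g /\ W k g) ->
     (exists g, G g) -> exists x, G x /\ forall k, W k x) -> baire Q.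
Proof.
  intros [hh [kk [Hh [Hk [Hkh Hhk]]]]] Hamb V HV Hd [z0 _].
  assert (HW : forall k, exists U, open Y U /\ forall g : @subspace _ G, V k (kk g) <-> U (proj1_sig g)).
  { intros k. exact (Hk (V k) (HV k)). }
  set (W := fun k => proj1_sig (constructive_indefinite_description _ (HW k))).
  assert (HW1 : forall k, open Y (W k)).
  { intros k. exact (proj1 (proj2_sig (constructive_indefinite_description _ (HW k)))). }
  assert (HW2 : forall k (g : @subspace _ G), V k (kk g) <-> W k (proj1_sig g)).
  { intros k. exact (proj2 (proj2_sig (constructive_indefinite_description _ (HW k)))). }
  destruct (Hamb W HW1) as [x [Gx Wx]].
  - intros k O HO [g [Gg Og]].
    assert (HO' : open Q (fun x => O (proj1_sig (hh x)))).
    { apply (Hh (fun z => O (proj1_sig z))). exists O; split; [exact HO|tauto]. }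
    destruct (Hd k _ HO') as [x [Ox Vx]].
    + exists (kk (exist _ g Gg)). rewrite Hhk. exact Og.
    + exists (proj1_sig (hh x)). split; [exact (proj2_sig (hh x))|split; [exact Ox|]].
      apply HW2. rewrite Hkh. exact Vx.
  - exists (proj1_sig (hh z0)). exact (proj2_sig (hh z0)).
  - exists (kk (exist _ x Gx)). intros k. apply HW2. exact (Wx k).
Qed.

Lemma dc_baire (Q : Top) : domain_complete Q -> baire Q.
Proof.
  intros [D [le [Hc [G [[Uo [HUo HG]] Hhom]]]]].
  apply (baire_transfer _ _ _ Hhom).
  intros W HW Hd Hne.
  destruct (@dom_baire D le Hc Uo W HUo HW) as [x [Ux Wx]].
  - intros k O HO [g [Ug Og]]. destruct (Hd k O HO) as [g' [Gg' [Og' Wg']]].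
    + exists g; split; [apply HG; exact Ug|exact Og].
    + exists g'; split; [apply HG; exact Gg'|tauto].
  - destruct Hne as [g Gg]. exists g. apply HG. exact Gg.
  - exists x. split; [apply HG; exact Ux|exact Wx].
Qed.

(** Well-filteredness for countable chains in sober spaces *)
Lemma chain_max (Y : Top) (F : (Y -> Prop) -> Prop) :
  (forall A B, F A -> F B -> (forall x, A x -> B x) \/ (forall x, B x -> A x)) ->
  forall l, (forall U, In U l -> F U) ->
  l = nil \/ exists M, F M /\ forall U, In U l -> forall x, U x -> M x.
Proof.
  intros Htot l. induction l as [|U l IH]; intros Hl; [left; reflexivity|right].
  assert (FU : F U) by (apply Hl; left; reflexivity).
  destruct IH as [->|[M [FM HM]]].
  - intros V HV; apply Hl; right; exact HV.
  - exists U. split; [exact FU|]. intros V [->|[]]; auto.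
  - destruct (Htot U M FU FM) as [HUM|HMU].
    + exists M; split; [exact FM|]. intros V [->|HV]; [exact HUM|exact (HM V HV)].
    + exists U; split; [exact FU|]. intros V [->|HV] x Vx; [exact Vx|apply HMU; exact (HM V HV x Vx)].
Qed.

Lemma well_filtered_seq (Y : Top) (K : nat -> Y -> Prop) :
  sober Y -> (forall j, compact _ (K j)) -> (forall j, saturated _ (K j)) ->
  (forall j, exists x, K j x) -> (forall j x, K (S j) x -> K j x) ->
  exists x, forall j, K j x.
Proof.
  intros Hsob Hcomp Hsat Hne Hdec.
  assert (Hdec' : forall i j, i <= j -> forall x, K j x -> K i x).
  { intros i j Hij. induction Hij; auto. }
  set (P := fun A : Y -> Prop => open Y A /\ forall j, ~ (forall x, K j x -> A x)).
  destruct (@zorn_union Y P) as [A [[HA HAK] Hmax]].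
  - intros F FP Ftot. split.
    + apply open_union. intros U FU; apply (FP U FU).
    + intros j Hj.
      destruct (Hcomp j F (fun U FU => proj1 (FP U FU)) Hj) as [l [Hl Hcov]].
      destruct (chain_max Y F Ftot l Hl) as [->|[M [FM HM]]].
      * destruct (Hne j) as [x Kx]. destruct (Hcov x Kx) as [U [[] _]].
      * apply (proj2 (FP M FM) j). intros x Kx. destruct (Hcov x Kx) as [U [HU Ux]].
        exact (HM U HU x Ux).
  - set (C := fun x => ~ A x).
    assert (HCc : closed _ C).
    { unfold closed. eapply open_ext; [|exact HA]. intros x; unfold C; split; [tauto|apply NNPP]. }
    assert (HirrC : irreducible_closed _ C).
    { split; [exact HCc|split].
      - apply NNPP; intros Hn. apply (HAK 0). intros x _. apply NNPP; intros nA. apply Hn; exists x; exact nA.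
      - intros C1 C2 H1 H2 Hcov.
        apply NNPP; intros Hn. apply not_or_and in Hn. destruct Hn as [Hn1 Hn2].
        assert (Hj : forall C', closed _ C' -> ~ (forall x, C x -> C' x) ->
                   exists j, forall x, K j x -> A x \/ ~ C' x).
        { intros C' HC' Hn'. apply NNPP; intros Hno.
          assert (PA' : P (fun x => A x \/ ~ C' x)).
          { split; [apply open_or; assumption|]. intros j Hj. apply Hno; exists j; exact Hj. }
          apply Hn'. intros x Cx. apply NNPP; intros nC'.
          apply Cx. apply (Hmax _ PA'); [intros y Ay; left; exact Ay|right; exact nC']. }
        destruct (Hj C1 H1 Hn1) as [j1 Hj1]. destruct (Hj C2 H2 Hn2) as [j2 Hj2].
        apply (HAK (max j1 j2)). intros x Kx.
        apply NNPP; intros nA.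
        destruct (Hj1 x (Hdec' j1 _ (Nat.le_max_l _ _) x Kx)) as [?|n1]; [tauto|].
        destruct (Hj2 x (Hdec' j2 _ (Nat.le_max_r _ _) x Kx)) as [?|n2]; [tauto|].
        destruct (Hcov x nA); tauto. }
    destruct (Hsob C HirrC) as [x [Hx _]].
    exists x. intros j. apply (Hsat j). intros U HU HKU.
    apply NNPP; intros nU. apply (HAK j). intros y Ky.
    apply NNPP; intros nAy. apply nU.
    apply (proj1 (Hx y) nAy U HU). apply HKU; exact Ky.
Qed.

Lemma lcs_baire (Q : Top) : LCS_complete Q -> baire Q.
Proof.
  intros [Y [Hsob [Hlc [G [[Uo [HUo HG]] Hhom]]]]].
  apply (baire_transfer _ _ _ Hhom).
  intros W HW Hd [g0 Gg0].
  set (St := ((Y -> Prop) * (Y -> Prop))%type).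
  set (P := fun p : St => compact _ (fst p) /\ saturated _ (fst p) /\ open Y (snd p) /\
              (forall x, snd p x -> fst p x) /\ exists g, G g /\ snd p g).
  set (R := fun k (p p' : St) => (forall x, fst p' x -> snd p x) /\
              (forall x, fst p' x -> W k x /\ Uo k x)).
  assert (Hstep : forall k p, P p -> exists p', P p' /\ R k p p').
  { intros k [K O] [HK [HKs [HO [HOK [g [Gg Og]]]]]]. simpl in *.
    destruct (Hd k O HO) as [g' [Gg' [Og' Wg']]]; [exists g; tauto|].
    assert (HU : open Y (fun x => O x /\ W k x /\ Uo k x)).
    { apply open_inter; [exact HO|apply open_inter; auto]. }
    destruct (Hlc g' _ HU) as [K' [O' [HK' [HKs' [HO' [Og'' [HOK' HK'U]]]]]]].
    { split; [exact Og'|split; [exact Wg'|apply HG; exact Gg']]. }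
    exists (K', O'). split.
    - unfold P; simpl. repeat split; auto. exists g'; tauto.
    - unfold R; simpl. split; intros x Kx; apply HK'U in Kx; tauto. }
  destruct (Hlc g0 (fun _ => True) (open_full Y) I) as [K0 [O0 [HK0 [HKs0 [HO0 [Og0 [HOK0 _]]]]]]].
  destruct (dep_seq _ P R Hstep (K0, O0)) as [f [_ Hf]].
  { unfold P; simpl. repeat split; auto. exists g0; tauto. }
  destruct (well_filtered_seq _ (fun j => fst (f j)) Hsob) as [x Hx].
  - intros j; apply (Hf j).
  - intros j; apply (Hf j).
  - intros j. destruct (Hf j) as [[_ [_ [_ [HOK [g [_ Og]]]]]] _]. exists g. apply HOK; exact Og.
  - intros j y Hy. destruct (Hf j) as [[_ [_ [_ [HOK _]]]] [HR _]]. apply HOK, HR, Hy.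
  - exists x. split.
    + apply HG. intros n. destruct (Hf n) as [_ [_ HR]]. apply (HR x (Hx (S n))).
    + intros k. destruct (Hf k) as [_ [_ HR]]. apply (HR x (Hx (S k))).
Qed.

Lemma homeo_full (Y : Top) : homeomorphic Y (@subspace Y (fun _ => True)).
Proof.
  exists (fun y => exist _ y I), (fun z => proj1_sig z). repeat split.
  - intros V [U [HU HV]]. eapply open_ext; [|exact HU]. intros x; simpl. rewrite (HV (exist _ x I)). tauto.
  - intros V HV. exists V. split; [exact HV|tauto].
  - intros [y []]. reflexivity.
Qed.

Lemma gdelta_full (Y : Top) : @G_delta Y (fun _ => True).
Proof. exists (fun _ _ => True). split; [intros; apply open_full|tauto]. Qed.

Lemma dc_scott (D : Type) (le : D -> D -> Prop) : continuous_dcpo le -> domain_complete (scott_space le).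
Proof.
  intros H. exists D, le. split; [exact H|]. exists (fun _ => True). split; [apply gdelta_full|apply homeo_full].
Qed.

Lemma lcs_self (Y : Top) : sober Y -> locally_compact Y -> LCS_complete Y.
Proof.
  intros Hs Hl. exists Y. split; [exact Hs|split; [exact Hl|]].
  exists (fun _ => True). split; [apply gdelta_full|apply homeo_full].
Qed.

Lemma open_saturated (Y : Top) (K : Y -> Prop) : open Y K -> saturated Y K.
Proof. intros HK x Hx. apply (Hx K HK); auto. Qed.

Lemma compact_single (Y : Top) (x : Y) : compact Y (fun y => y = x).
Proof.
  intros F HF Hcov. destruct (Hcov x eq_refl) as [U [FU Ux]].
  exists (U :: nil). split; [intros V [<-|[]]; exact FU|].
  intros y ->. exists U; split; [left; reflexivity|exact Ux].
Qed.

Lemma hausdorff_sober (Y : Top) :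
  (forall x y : Y, x <> y -> exists A B, open Y A /\ open Y B /\ A x /\ B y /\ forall z, ~ (A z /\ B z)) ->
  sober Y.
Proof.
  intros Hs.
  assert (Hpc : forall x y, point_closure Y x y -> y = x).
  { intros x y H. apply NNPP; intros Hne. destruct (Hs x y (fun e => Hne (eq_sym e))) as [A [B [HA [HB [Ax [By Hd]]]]]].
    apply (Hd x). split; [exact Ax|]. apply (H B HB By). }
  intros C [HC [[x Cx] Hirr]].
  assert (Hsing : forall y, C y -> y = x).
  { intros y Cy. apply NNPP; intros Hne.
    destruct (Hs x y (fun e => Hne (eq_sym e))) as [A [B [HA [HB [Ax [By Hd]]]]]].
    assert (H1 : closed Y (fun z => ~ A z)). { unfold closed. eapply open_ext; [|exact HA]. intros z; split; [tauto|apply NNPP]. }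
    assert (H2 : closed Y (fun z => ~ B z)). { unfold closed. eapply open_ext; [|exact HB]. intros z; split; [tauto|apply NNPP]. }
    destruct (Hirr _ _ H1 H2) as [Hc|Hc].
    - intros z _. apply not_and_or. apply Hd.
    - apply (Hc x Cx Ax).
    - apply (Hc y Cy By). }
  exists x. split.
  - intros y. split.
    + intros Cy. rewrite (Hsing y Cy). intros U _ Ux; exact Ux.
    + intros Hy. rewrite (Hpc x y Hy). exact Cx.
  - intros x' Hx'. apply Hsing. apply Hx'. intros U _ Ux; exact Ux.
Qed.

Lemma alg_cont (D : Type) (le : D -> D -> Prop) :
  is_dcpo le -> (forall x, way_below le x x) -> continuous_dcpo le.
Proof.
  intros Hd Hw. split; [exact Hd|]. destruct Hd as [Hr [Ht _]].
  assert (Hle : forall y x, way_below le y x -> le y x).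
  { intros y x H. destruct (H (fun z => z = x) x) as [d [-> Hd]]; [|split|apply Hr|exact Hd].
    - split; [exists x; reflexivity|]. intros a b -> ->. exists x; split; [reflexivity|split; apply Hr].
    - intros s ->; apply Hr.
    - intros z Hz; apply Hz; reflexivity. }
  intros x. split.
  - split; [exists x; apply Hw|]. intros a b Ha Hb. exists x. split; [apply Hw|split; apply Hle; assumption].
  - split; [intros s Hs; apply Hle; exact Hs|]. intros y Hy. apply Hy. apply Hw.
Qed.

(** * Sierpinski space *)
Definition bleS (b c : bool) : Prop := b = false \/ c = true.
Definition Sier : Top := scott_space bleS.

Lemma Sier_dcpo : is_dcpo bleS.
Proof.
  unfold bleS. split; [intros [|]; auto|split; [intros [|] [|] [|]; intuition congruence|split]].
  - intros [|] [|]; intuition congruence.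
  - intros S HS. destruct (classic (S true)) as [Ht|Hf].
    + exists true. split; [auto|]. intros y Hy. destruct (Hy true Ht); [discriminate|auto].
    + exists false. split; [|auto]. intros [|] Hs; [contradiction|auto].
Qed.

Lemma Sier_cont : continuous_dcpo bleS.
Proof.
  apply alg_cont; [apply Sier_dcpo|]. intros [|] S s [[d Sd] _] [Hub Hl] Hs.
  - destruct (classic (S true)) as [Ht|Hf]; [exists true; unfold bleS; auto|].
    exfalso. assert (H : bleS s false). { apply Hl. intros [|] Hz; [contradiction|left; auto]. }
    unfold bleS in *. destruct Hs, H; congruence.
  - exists d. split; [exact Sd|left; auto].
Qed.

Lemma Sier_open_up (U : bool -> Prop) : scott_open bleS U -> U false -> U true.
Proof. intros [H _] Hf. apply (H false); [exact Hf|right; auto]. Qed.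

Lemma Sier_open_true : scott_open bleS (fun b => b = true).
Proof.
  split.
  - intros x y -> [H|H]; [discriminate|exact H].
  - intros S s HS [Hub Hl] ->. apply NNPP; intros Hn.
    assert (H : bleS true false). { apply Hl. intros [|] Hz; [exfalso; apply Hn; exists true; auto|left; auto]. }
    destruct H; discriminate.
Qed.

Lemma Sier_sober : sober Sier.
Proof.
  intros C [HC [[x0 Cx0] Hirr]].
  assert (Hdown : C true -> C false).
  { intros Ct. apply NNPP; intros nCf. apply (Sier_open_up _ HC nCf). exact Ct. }
  assert (Cf : C false). { destruct x0; auto. }
  assert (pc_true : forall y, point_closure Sier true y).
  { intros y U HU Uy. destruct y; [exact Uy|apply Sier_open_up; assumption]. }
  assert (pc_false : forall y, point_closure Sier false y <-> y = false).
  { intros [|]; split.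
    - intros H. symmetry. apply (H (fun b => b = true) Sier_open_true eq_refl).
    - intros H; discriminate.
    - intros _; reflexivity.
    - intros _ U _ Uy; exact Uy. }
  destruct (classic (C true)) as [Ct|nCt].
  - exists true. split.
    + intros y; split; [intros _; apply pc_true|intros _; destruct y; auto].
    + intros [|] Hx'; [reflexivity|]. exfalso. assert (E := proj1 (pc_false true) (proj1 (Hx' true) Ct)). discriminate.
  - exists false. split.
    + intros y; rewrite pc_false; split; [intros Cy; destruct y; tauto|intros ->; exact Cf].
    + intros [|] Hx'; [|reflexivity]. exfalso. apply nCt. apply Hx'. apply pc_true.
Qed.

Lemma Sier_lc : locally_compact Sier.
Proof.
  intros x U HU Ux.
  set (K := fun y => bleS x y).
  assert (HK : open Sier K).
  { destruct x.
    - eapply open_ext; [|exact Sier_open_true]. intros y; unfold K, bleS; intuition congruence.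
    - eapply open_ext; [|apply open_full]. intros y; unfold K, bleS; tauto. }
  assert (Kx : K x) by (unfold K, bleS; destruct x; auto).
  exists K, K. split; [|split; [apply open_saturated; exact HK|split; [exact HK|split; [exact Kx|split; [auto|]]]]].
  - intros F HF Hcov. destruct (Hcov x Kx) as [V [FV Vx]].
    exists (V :: nil). split; [intros W [<-|[]]; exact FV|].
    intros y Ky. exists V. split; [left; reflexivity|]. destruct (HF V FV) as [Hup _]. apply (Hup x); assumption.
  - intros y Ky. destruct HU as [Hup _]. apply (Hup x); assumption.
Qed.

Lemma Sier_dc : domain_complete Sier.
Proof. apply dc_scott, Sier_cont. Qed.
Lemma Sier_lcs : LCS_complete Sier.
Proof. apply lcs_self; [apply Sier_sober|apply Sier_lc]. Qed.

Section Disc.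
Variable A : Type.
Definition eqle (a b : A) : Prop := a = b.
Definition Disc : Top := scott_space eqle.

Lemma disc_open (U : A -> Prop) : open Disc U.
Proof.
  split; [intros x y Ux <-; exact Ux|].
  intros S s [[d Sd] Hd] [Hub _] Us. exists d. split; [exact Sd|]. rewrite (Hub d Sd). exact Us.
Qed.

Lemma disc_cont : continuous_dcpo eqle.
Proof.
  unfold eqle. apply alg_cont.
  - split; [auto|split; [intros; congruence|split; [auto|]]].
    intros S [[d Sd] Hd]. exists d. split; [|intros y Hy; apply Hy; exact Sd].
    intros s Ss. destruct (Hd s d Ss Sd) as [c [_ [-> ->]]]. reflexivity.
  - intros x S s [[d Sd] Hd] [Hub _] Hs. exists d. split; [exact Sd|]. unfold eqle in *. rewrite (Hub d Sd); auto.
Qed.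

Lemma disc_dc : domain_complete Disc.
Proof. apply dc_scott, disc_cont. Qed.

Lemma disc_lcs : LCS_complete Disc.
Proof.
  apply lcs_self.
  - apply hausdorff_sober. intros x y Hxy. exists (fun z => z = x), (fun z => z = y).
    repeat split; try apply disc_open; try reflexivity. intros z [-> ->]. apply Hxy; reflexivity.
  - intros x U HU Ux. exists (fun z => z = x), (fun z => z = x).
    split; [apply compact_single|split; [apply open_saturated, disc_open|split; [apply disc_open|]]].
    split; [reflexivity|split; [auto|intros y ->; exact Ux]].
Qed.
End Disc.

(** * The space Y: countably many convergent sequences indexed by list nat *)
Definition Ypt := (list nat * option nat)%type.
Definition Yopen (U : Ypt -> Prop) : Prop :=
  forall s, U (s, None) -> exists N, forall n, N <= n -> U (s, Some n).

Lemma Yopen_full : Yopen (fun _ => True).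
Proof. intros s _. exists 0; auto. Qed.
Lemma Yopen_inter U V : Yopen U -> Yopen V -> Yopen (fun x => U x /\ V x).
Proof.
  intros HU HV s [Us Vs]. destruct (HU s Us) as [N1 H1]. destruct (HV s Vs) as [N2 H2].
  exists (max N1 N2). intros n Hn. split; [apply H1|apply H2]; lia.
Qed.
Lemma Yopen_union (F : (Ypt -> Prop) -> Prop) : (forall U, F U -> Yopen U) ->
  Yopen (fun x => exists U, F U /\ U x).
Proof.
  intros HF s [U [FU Us]]. destruct (HF U FU s Us) as [N H]. exists N. intros n Hn. exists U; auto.
Qed.
Definition Ytop : Top := MkTop Yopen Yopen_full Yopen_inter Yopen_union.

Lemma Y_single_open s n : open Ytop (fun z => z = (s, Some n)).
Proof. intros t H. discriminate. Qed.
Lemma Y_cosingle_open s n : open Ytop (fun z => z <> (s, Some n)).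
Proof. intros t _. exists (S n). intros m Hm E. inversion E. lia. Qed.
Lemma Y_fiber_open s : open Ytop (fun z => fst z = s).
Proof. intros t H. exists 0. intros; exact H. Qed.

Lemma Y_sober : sober Ytop.
Proof.
  apply hausdorff_sober. intros [s a] [t b] Hne.
  destruct (list_eq_dec Nat.eq_dec s t) as [<-|Hst].
  - destruct a as [n|]; destruct b as [m|].
    + exists (fun z => z = (s, Some n)), (fun z => z = (s, Some m)).
      repeat split; auto using Y_single_open. intros z [-> E]. apply Hne; rewrite E; reflexivity.
    + exists (fun z => z = (s, Some n)), (fun z => z <> (s, Some n)).
      split; [apply Y_single_open|split; [apply Y_cosingle_open|split; [reflexivity|split; [discriminate|]]]].
      intros z [H1 H2]; tauto.
    + exists (fun z => z <> (s, Some m)), (fun z => z = (s, Some m)).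
      split; [apply Y_cosingle_open|split; [apply Y_single_open|split; [discriminate|split; [reflexivity|]]]].
      intros z [H1 H2]; tauto.
    + exfalso; apply Hne; reflexivity.
  - exists (fun z => fst z = s), (fun z => fst z = t). repeat split; auto using Y_fiber_open.
    intros z [H1 H2]. apply Hst. congruence.
Qed.

Lemma Y_lc : locally_compact Ytop.
Proof.
  intros [s [n|]] U HU Ux.
  - exists (fun z => z = (s, Some n)), (fun z => z = (s, Some n)).
    split; [apply compact_single|split; [apply open_saturated, Y_single_open|split; [apply Y_single_open|]]].
    split; [reflexivity|split; [auto|intros y ->; exact Ux]].
  - destruct (HU s Ux) as [N HN].
    set (K := fun z : Ypt => fst z = s /\ match snd z with None => True | Some m => N <= m end).
    assert (HK : open Ytop K).
    { intros t [E _]. exists N. intros m Hm. split; [exact E|exact Hm]. }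
    exists K, K. split; [|split; [apply open_saturated; exact HK|split; [exact HK|split; [split; simpl; auto|split; [auto|]]]]].
    + intros F HF Hcov.
      destruct (Hcov (s, None)) as [U0 [FU0 U0s]]; [split; simpl; auto|].
      destruct (HF U0 FU0 s U0s) as [N0 HN0].
      assert (Hl : forall M, exists l, (forall V, In V l -> F V) /\
                 forall m, N <= m -> m < M -> exists V, In V l /\ V (s, Some m)).
      { induction M as [|M [l [Hl1 Hl2]]].
        - exists nil. split; [intros V []|intros; lia].
        - destruct (le_lt_dec N M) as [HNM|HNM].
          + destruct (Hcov (s, Some M)) as [V [FV VM]]; [split; simpl; auto|].
            exists (V :: l). split; [intros W [<-|HW]; auto|].
            intros m Hm1 Hm2. destruct (Nat.eq_dec m M) as [->|Hne].
            * exists V; split; [left|]; auto.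
            * destruct (Hl2 m Hm1 ltac:(lia)) as [W [HW Wm]]. exists W; split; [right|]; auto.
          + exists l. split; [exact Hl1|]. intros m Hm1 Hm2. apply Hl2; lia. }
      destruct (Hl N0) as [l [Hl1 Hl2]].
      exists (U0 :: l). split; [intros W [<-|HW]; auto|].
      intros [t [m|]] [E Hm]; simpl in E, Hm; subst t.
      * destruct (le_lt_dec N0 m) as [H0|H0].
        -- exists U0; split; [left; reflexivity|apply HN0; exact H0].
        -- destruct (Hl2 m Hm H0) as [W [HW Wm]]. exists W; split; [right|]; auto.
      * exists U0; split; [left; reflexivity|exact U0s].
    + intros [t [m|]] [E Hm]; simpl in E, Hm; subst t; [apply HN; exact Hm|exact Ux].
Qed.

Lemma Y_lcs : LCS_complete Ytop.
Proof. apply lcs_self; [apply Y_sober|apply Y_lc]. Qed.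

Inductive E := Eb (k : nat) | Ep (n : nat) | Et.
Definition leE (a b : E) : Prop :=
  match a, b with
  | Eb k, Eb k' => k <= k'
  | Eb k, Ep n => k <= n
  | Eb _, Et => True
  | Ep n, Ep m => n = m
  | Et, Et => True
  | _, _ => False
  end.
Definition Dt := (list nat * E)%type.
Definition leD (x y : Dt) : Prop := fst x = fst y /\ leE (snd x) (snd y).

Lemma leD_refl x : leD x x.
Proof. split; [reflexivity|destruct (snd x); simpl; auto]. Qed.
Lemma leD_trans x y z : leD x y -> leD y z -> leD x z.
Proof.
  intros [H1 H2] [H3 H4]. split; [congruence|].
  destruct (snd x), (snd y), (snd z); simpl in *; try tauto; lia.
Qed.
Lemma leD_anti x y : leD x y -> leD y x -> x = y.
Proof.
  destruct x as [s a], y as [t b]; intros [H1 H2] [_ H4]; simpl in *; subst.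
  f_equal. destruct a, b; simpl in *; try tauto; f_equal; lia.
Qed.

Lemma below_l S l a : is_lub leD S l -> S a -> leD a l.
Proof. intros [H _] Sa; apply H, Sa. Qed.

Lemma lubcases S l : directed leD S -> is_lub leD S l ->
  (forall n, snd l = Ep n -> S l) /\ (forall m, snd l = Eb m -> S l) /\
  (snd l = Et -> S l \/ forall N, exists k, N <= k /\ S (fst l, Eb k)).
Proof.
  intros [[d Sd] Hdir] [Hub Hlub]. destruct l as [s e].
  split; [|split].
  - intros n En. simpl in En; subst e. apply NNPP; intros nS.
    assert (H : leD (s, Ep n) (s, Eb n)).
    { apply Hlub. intros a Sa. destruct (Hub a Sa) as [Ea La]. simpl in *. split; [exact Ea|].
      destruct a as [t [k|m|]]; simpl in *; subst; try tauto. }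
    destruct H as [_ []].
  - intros m Em. simpl in Em; subst e. apply NNPP; intros nS.
    assert (Hlt : forall a, S a -> exists k, a = (s, Eb k) /\ k < m).
    { intros [t [k|k|]] Sa; destruct (Hub _ Sa) as [Ea La]; simpl in *; subst; try tauto.
      exists k. split; [reflexivity|]. destruct (Nat.eq_dec k m) as [->|]; [contradiction|lia]. }
    destruct (Hlt d Sd) as [k0 [_ Hk0]].
    assert (H : leD (s, Eb m) (s, Eb (m - 1))).
    { apply Hlub. intros a Sa. destruct (Hlt a Sa) as [k [-> Hk]]. split; simpl; [reflexivity|lia]. }
    destruct H as [_ H]. simpl in H. lia.
  - intros Ee. simpl in Ee; subst e. apply NNPP; intros Hn. apply not_or_and in Hn. destruct Hn as [nS Hn].
    apply not_all_ex_not in Hn. destruct Hn as [N HN].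
    assert (H : leD (s, Et) (s, Eb N)).
    { apply Hlub. intros [t [k|k|]] Sa; destruct (Hub _ Sa) as [Ea La]; simpl in *; subst; try tauto.
      split; [reflexivity|]. simpl. destruct (le_lt_dec N k) as [Hk|Hk]; [|lia].
      exfalso. apply HN. exists k. auto. }
    destruct H as [_ []].
Qed.

Lemma max_exists (P : nat -> Prop) m : (exists k, P k) -> (forall k, P k -> k <= m) ->
  exists k, P k /\ forall j, P j -> j <= k.
Proof.
  revert P. induction m as [|m IH]; intros P [k Pk] Hb.
  - exists k. split; [exact Pk|]. intros j Pj. assert (H1 := Hb j Pj). assert (H2 := Hb k Pk). lia.
  - destruct (classic (P (S m))) as [HS|HS].
    + exists (S m). split; [exact HS|exact Hb].
    + apply IH; [exists k; exact Pk|]. intros j Pj. specialize (Hb j Pj).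
      destruct (Nat.eq_dec j (S m)) as [->|]; [contradiction|lia].
Qed.

Lemma D_dcpo : is_dcpo leD.
Proof.
  split; [apply leD_refl|split; [apply leD_trans|split; [apply leD_anti|]]].
  intros S HS. destruct HS as [[[s e0] Sd] Hdir] eqn:HSe.
  assert (Hfst : forall a, S a -> fst a = s).
  { intros a Sa. destruct (Hdir a (s, e0) Sa Sd) as [c [_ [[E1 _] [E2 _]]]]. simpl in *; congruence. }
  destruct (classic (exists n, S (s, Ep n))) as [[n Hn]|HnP].
  { exists (s, Ep n). split.
    - intros a Sa. destruct (Hdir a (s, Ep n) Sa Hn) as [[t c] [_ [Ha [Et' Lc]]]].
      simpl in *. subst t. destruct c; simpl in Lc; try tauto; subst. exact Ha.
    - intros y Hy. apply Hy, Hn. }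
  destruct (classic (S (s, Et))) as [HT|HnT].
  { exists (s, Et). split.
    - intros a Sa. destruct (Hdir a (s, Et) Sa HT) as [[t c] [_ [Ha [Et' Lc]]]].
      simpl in *. subst t. destruct c; simpl in Lc; try tauto; exact Ha.
    - intros y Hy. apply Hy, HT. }
  assert (Hshape : forall a, S a -> exists k, a = (s, Eb k)).
  { intros [t c] Sa. assert (Et' := Hfst _ Sa). simpl in Et'; subst t.
    destruct c as [k|n|]; [exists k; reflexivity|exfalso; apply HnP; exists n; exact Sa|contradiction]. }
  destruct (classic (exists N, forall k, S (s, Eb k) -> k <= N)) as [[N HN]|Hunb].
  - destruct (max_exists (fun k => S (s, Eb k)) N) as [m [Hm Hmax]]; [|exact HN|].
    { destruct (Hshape _ Sd) as [k Hk]. exists k. rewrite <- Hk. exact Sd. }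
    exists (s, Eb m). split.
    + intros a Sa. destruct (Hshape a Sa) as [k ->]. split; [reflexivity|simpl; apply Hmax; exact Sa].
    + intros y Hy. apply Hy, Hm.
  - exists (s, Et). split.
    + intros a Sa. destruct (Hshape a Sa) as [k ->]. split; simpl; auto.
    + intros [t c] Hy. destruct (Hy _ Sd) as [Et' _]. simpl in Et'; subst t.
      split; [reflexivity|]. destruct c as [m|m|]; simpl; auto.
      * apply Hunb. exists m. intros k Sk. destruct (Hy _ Sk) as [_ L]. exact L.
      * apply Hunb. exists m. intros k Sk. destruct (Hy _ Sk) as [_ L]. exact L.
Qed.

Lemma chain_dir s : directed leD (fun a => exists k, a = (s, Eb k)).
Proof.
  split; [exists (s, Eb 0); exists 0; reflexivity|].
  intros a b [i ->] [j ->]. exists (s, Eb (max i j)). split; [exists (max i j); reflexivity|].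
  split; split; simpl; auto; lia.
Qed.

Lemma chain_lub s : is_lub leD (fun a => exists k, a = (s, Eb k)) (s, Et).
Proof.
  split.
  - intros a [k ->]. split; simpl; auto.
  - intros [t c] Hy. destruct (Hy (s, Eb 0) (ex_intro _ 0 eq_refl)) as [Et' _]. simpl in Et'; subst t.
    split; [reflexivity|]. destruct c as [m|m|]; simpl; auto.
    + destruct (Hy (s, Eb (S m)) (ex_intro _ (S m) eq_refl)) as [_ L]. simpl in L. lia.
    + destruct (Hy (s, Eb (S m)) (ex_intro _ (S m) eq_refl)) as [_ L]. simpl in L. lia.
Qed.

Lemma wb_Eb s k x : leD (s, Eb k) x -> way_below leD (s, Eb k) x.
Proof.
  intros Hx S l HS Hl Hxl. assert (Hkl := leD_trans _ _ _ Hx Hxl).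
  destruct (lubcases S l HS Hl) as [Hp [Hb Ht]].
  destruct l as [t [m|m|]].
  - exists (t, Eb m). split; [apply (Hb m); reflexivity|exact Hkl].
  - exists (t, Ep m). split; [apply (Hp m); reflexivity|exact Hkl].
  - destruct (Ht eq_refl) as [HS'|Hun].
    + exists (t, Et). split; [exact HS'|exact Hkl].
    + destruct (Hun k) as [k' [Hk' Sk']]. exists (t, Eb k'). split; [exact Sk'|].
      destruct Hkl as [E1 _]. split; [exact E1|simpl; exact Hk'].
Qed.

Lemma wb_Ep s n : way_below leD (s, Ep n) (s, Ep n).
Proof.
  intros S l HS Hl Hxl. destruct (lubcases S l HS Hl) as [Hp _].
  destruct l as [t [m|m|]]; destruct Hxl as [E1 L]; simpl in *; try tauto. subst.
  exists (t, Ep m). split; [apply (Hp m); reflexivity|apply leD_refl].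
Qed.

Lemma not_wb_Et s : ~ way_below leD (s, Et) (s, Et).
Proof.
  intros H. destruct (H _ _ (chain_dir s) (chain_lub s) (leD_refl _)) as [d [[k ->] [_ L]]].
  exact L.
Qed.

Lemma wb_leD y x : way_below leD y x -> leD y x.
Proof.
  intros H. destruct (H (fun z => z = x) x) as [d [-> Hd]]; [|split|apply leD_refl|exact Hd].
  - split; [exists x; reflexivity|]. intros a b -> ->. exists x; split; [reflexivity|split; apply leD_refl].
  - intros z ->; apply leD_refl.
  - intros z Hz; apply Hz; reflexivity.
Qed.

Lemma D_cont : continuous_dcpo leD.
Proof.
  split; [exact D_dcpo|]. intros [s [k|n|]].
  - assert (Hw : way_below leD (s, Eb k) (s, Eb k)) by (apply wb_Eb, leD_refl).
    split; [split; [exists (s, Eb k); exact Hw|]|split].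
    + intros a b Ha Hb. exists (s, Eb k). split; [exact Hw|split; apply wb_leD; assumption].
    + intros z Hz; apply wb_leD, Hz.
    + intros y Hy. apply Hy, Hw.
  - assert (Hw := wb_Ep s n).
    split; [split; [exists (s, Ep n); exact Hw|]|split].
    + intros a b Ha Hb. exists (s, Ep n). split; [exact Hw|split; apply wb_leD; assumption].
    + intros z Hz; apply wb_leD, Hz.
    + intros y Hy. apply Hy, Hw.
  - assert (Hsh : forall a, way_below leD a (s, Et) -> exists k, a = (s, Eb k)).
    { intros [t c] Ha. destruct (wb_leD _ _ Ha) as [Et' L]. simpl in *; subst t.
      destruct c as [k|m|]; simpl in L; try tauto. exists k; reflexivity. exfalso; exact (not_wb_Et s Ha). }
    split; [split|split].
    + exists (s, Eb 0). apply wb_Eb. split; simpl; auto.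
    + intros a b Ha Hb. destruct (Hsh a Ha) as [i ->]. destruct (Hsh b Hb) as [j ->].
      exists (s, Eb (max i j)). split; [apply wb_Eb; split; simpl; auto|].
      split; split; simpl; auto; lia.
    + intros z Hz; apply wb_leD, Hz.
    + intros y Hy. apply (proj2 (chain_lub s)). intros a [k ->]. apply Hy. apply wb_Eb. split; simpl; auto.
Qed.

Definition Gset (d : Dt) : Prop := match snd d with Eb _ => False | _ => True end.
Definition Uo (k : nat) (d : Dt) : Prop := ~ exists j, j <= k /\ snd d = Eb j.

Lemma Uo_open k : scott_open leD (Uo k).
Proof.
  split.
  - intros x y Hx [E L] [j [Hj Ey]]. apply Hx. destruct x as [s [i|i|]]; simpl in *; rewrite Ey in L; simpl in L; try tauto.
    exists i. split; [lia|reflexivity].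
  - intros S l HS Hl Hu. apply NNPP; intros Hn. apply Hu.
    assert (H : leD l (fst l, Eb k)).
    { apply (proj2 Hl). intros a Sa. destruct (below_l S l a Hl Sa) as [E _].
      split; [exact E|]. apply NNPP; intros nL. apply Hn. exists a. split; [exact Sa|].
      intros [j [Hj Ea]]. apply nL. rewrite Ea. simpl. exact Hj. }
    destruct H as [_ L]. destruct l as [s [i|i|]]; simpl in L; try tauto. exists i; split; [exact L|reflexivity].
Qed.

Lemma Gset_delta : @G_delta (scott_space leD) Gset.
Proof.
  exists Uo. split; [exact Uo_open|]. intros [s [i|i|]]; unfold Gset, Uo; simpl; split.
  - tauto.
  - intros H. apply (H i). exists i; auto.
  - intros _ n [j [_ E]]; discriminate.
  - auto.
  - intros _ n [j [_ E]]; discriminate.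
  - auto.
Qed.

Definition emb (y : Ypt) : Dt := match snd y with Some n => (fst y, Ep n) | None => (fst y, Et) end.
Definition unemb (d : Dt) : Ypt := match snd d with Ep n => (fst d, Some n) | _ => (fst d, None) end.
Lemma emb_G y : Gset (emb y). Proof. destruct y as [s [n|]]; exact I. Qed.
Lemma unemb_emb y : unemb (emb y) = y. Proof. destruct y as [s [n|]]; reflexivity. Qed.
Lemma emb_unemb d : Gset d -> emb (unemb d) = d. Proof. unfold Gset; destruct d as [s [i|i|]]; simpl; intros H; [contradiction|reflexivity|reflexivity]. Qed.

Definition Up (V : Ypt -> Prop) (d : Dt) : Prop :=
  match snd d with
  | Eb k => V (fst d, None) /\ forall n, k <= n -> V (fst d, Some n)
  | Ep n => V (fst d, Some n)
  | Et => V (fst d, None)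
  end.

Lemma Up_open V : Yopen V -> scott_open leD (Up V).
Proof.
  intros HV. split.
  - intros [s a] [t b] Hx [E L]. simpl in E; subst t. destruct a as [k|n|], b as [k'|n'|].
    all: unfold Up in *; simpl in *; try tauto.
    + split; [tauto|]. intros n Hn. apply Hx. lia.
    + apply Hx. exact L.
    + subst; exact Hx.
  - intros S l HS Hl Hx. destruct (lubcases S l HS Hl) as [Hp [Hb Ht]].
    destruct l as [s [m|m|]].
    + exists (s, Eb m). split; [apply (Hb m); reflexivity|exact Hx].
    + exists (s, Ep m). split; [apply (Hp m); reflexivity|exact Hx].
    + destruct (Ht eq_refl) as [HS'|Hun]; [exists (s, Et); split; [exact HS'|exact Hx]|].
      destruct (HV s Hx) as [N HN]. destruct (Hun N) as [k [Hk Sk]].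
      exists (s, Eb k). split; [exact Sk|]. simpl. split; [exact Hx|]. intros n Hn; apply HN; lia.
Qed.

Lemma pre_open U : scott_open leD U -> Yopen (fun y => U (emb y)).
Proof.
  intros [Hup Hin] s Hs. simpl in Hs.
  destruct (Hin _ _ (chain_dir s) (chain_lub s) Hs) as [d [[N ->] UN]].
  exists N. intros n Hn. simpl. apply (Hup (s, Eb N)); [exact UN|]. split; simpl; auto.
Qed.

Lemma Y_dc : domain_complete Ytop.
Proof.
  exists Dt, leD. split; [exact D_cont|]. exists Gset. split; [exact Gset_delta|].
  exists (fun y => exist _ (emb y) (emb_G y)), (fun z => unemb (proj1_sig z)).
  split; [|split; [|split]].
  - intros V [U [HU HVU]]. change (Yopen (fun y => V (exist Gset (emb y) (emb_G y)))).
    intros s Hs. apply HVU in Hs. destruct (pre_open U HU s Hs) as [N HN].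
    exists N. intros n Hn. apply HVU. apply (HN n Hn).
  - intros V HV. exists (Up V). split; [apply Up_open; exact HV|].
    intros [[s [i|i|]] Gd]; simpl; unfold Gset in Gd; simpl in Gd; tauto.
  - intros y. apply unemb_emb.
  - intros [d Gd]. simpl. apply eq_sig_hprop; [intros; apply proof_irrelevance|]. simpl. apply emb_unemb, Gd.
Qed.

Definition X0 : Top := Disc (list nat * nat).
Definition f0 (x : X0) : Ytop := (fst x, Some (snd x)).
Definition g0 (x : X0) : Ytop := (snd x :: fst x, None).
Definition cls (y : Ypt) : list nat := match snd y with Some n => n :: fst y | None => fst y end.

Lemma f0_cont : continuous f0. Proof. intros V _. apply disc_open. Qed.
Lemma g0_cont : continuous g0. Proof. intros V _. apply disc_open. Qed.

Definition indic {Z : Top} (O : Z -> Prop) (z : Z) : Sier :=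
  if excluded_middle_informative (O z) then true else false.

Lemma indic_true {Z : Top} (O : Z -> Prop) z : indic O z = true <-> O z.
Proof. unfold indic. destruct (excluded_middle_informative (O z)); split; intros; try tauto; discriminate. Qed.

Lemma indic_iff {Z Z' : Top} (O : Z -> Prop) (O' : Z' -> Prop) a b : (O a <-> O' b) -> indic O a = indic O' b.
Proof.
  intros H. unfold indic. destruct (excluded_middle_informative (O a)), (excluded_middle_informative (O' b)); tauto.
Qed.

Lemma indic_cont {Z : Top} (O : Z -> Prop) : open Z O -> continuous (indic O).
Proof.
  intros HO V HV.
  destruct (classic (V false)) as [Vf|nVf].
  - eapply open_ext; [|apply open_full]. intros z; split; [intros _|auto].
    destruct (indic O z); [exact (Sier_open_up V HV Vf)|exact Vf].
  - destruct (classic (V true)) as [Vt|nVt].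
    + eapply open_ext; [|exact HO]. intros z. rewrite <- indic_true.
      destruct (indic O z); split; intros; try tauto; discriminate.
    + eapply open_ext; [|apply open_empty]. intros z; split; [tauto|]. destruct (indic O z); tauto.
Qed.

Lemma cont_comp {A B C : Top} (f : A -> B) (g : B -> C) : continuous f -> continuous g -> continuous (fun x => g (f x)).
Proof. intros Hf Hg V HV. apply (Hf _ (Hg V HV)). Qed.

Definition Topen (A : list nat -> Prop) : Prop := forall s, A s -> exists N, forall n, N <= n -> A (n :: s).

Lemma descend A t : Topen A -> A t -> forall m, exists d, A d /\ m + length t <= length d.
Proof.
  intros HA At m. induction m as [|m [d [Ad Hd]]]; [exists t; split; [exact At|lia]|].
  destruct (HA d Ad) as [N HN]. exists (N :: d). split; [apply HN; lia|simpl; lia].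
Qed.

Definition desc (s u : list nat) : Prop := exists p, u = p ++ s.

Lemma desc_open s : Topen (desc s).
Proof. intros u [p ->]. exists 0. intros n _. exists (n :: p). reflexivity. Qed.

Lemma sep_desc s t : desc s t -> s <> t -> exists A B, Topen A /\ Topen B /\ A s /\ B t /\ forall u, ~ (A u /\ B u).
Proof.
  intros [p Hp] Hne. destruct p as [|a p'] using rev_ind; [simpl in Hp; congruence|].
  rewrite <- app_assoc in Hp. simpl in Hp.
  exists (fun u => desc s u /\ ~ desc (a :: s) u), (desc (a :: s)).
  split; [|split; [apply desc_open|split; [split|split]]].
  - intros u [[q ->] Hn]. exists (S a). intros n Hn'. split; [exists (n :: q); reflexivity|].
    intros [r Hr]. destruct r as [|b r]; simpl in Hr; [inversion Hr; lia|].
    injection Hr as _ H1. apply Hn. exists r. exact H1.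
  - exists nil; reflexivity.
  - intros [r Hr]. assert (E := f_equal (@length nat) Hr). rewrite length_app in E. simpl in E. lia.
  - exists p'. exact Hp.
  - intros u [[_ H1] H2]. tauto.
Qed.

Lemma sep_tree s t : s <> t -> exists A B, Topen A /\ Topen B /\ A s /\ B t /\ forall u, ~ (A u /\ B u).
Proof.
  intros Hne.
  destruct (classic (desc s t)) as [Hst|Hst]; [apply sep_desc; assumption|].
  destruct (classic (desc t s)) as [Hts|Hts].
  - destruct (sep_desc t s Hts (fun e => Hne (eq_sym e))) as [A [B [HA [HB [At [Bs Hd]]]]]].
    exists B, A. repeat split; auto. intros u [H1 H2]. apply (Hd u). tauto.
  - exists (desc s), (desc t). split; [apply desc_open|split; [apply desc_open|split; [exists nil; reflexivity|split; [exists nil; reflexivity|]]]].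
    intros u [[p Hp] [p' Hp']]. rewrite Hp' in Hp. apply app_eq_app in Hp.
    destruct Hp as [l [[_ E]|[_ E]]].
    + first [apply Hst; exists l; exact E|apply Hts; exists l; exact E].
    + first [apply Hst; exists l; exact E|apply Hts; exists l; exact E].
Qed.

Lemma no_coeq (P : Top -> Prop) : P Sier -> (forall Q, P Q -> baire Q) ->
  ~ (exists (Q : Top) (q : Ytop -> Q), @is_coequalizer P X0 Ytop f0 g0 Q q).
Proof.
  intros HS Hb [Q [q [PQ [Hq [Hfg Huniv]]]]].
  assert (L0 : forall y, q y = q (cls y, None)).
  { intros [s [n|]]; [exact (Hfg (s, n))|reflexivity]. }
  assert (L1 : forall O1 O2, open Q O1 -> open Q O2 -> (forall y, O1 (q y) <-> O2 (q y)) -> forall z, O1 z <-> O2 z).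
  { intros O1 O2 H1 H2 Hy z.
    set (h := fun y => indic O1 (q y)).
    destruct (Huniv Sier h HS (cont_comp q (indic O1) Hq (indic_cont O1 H1))) as [u [Hu [Huq Huu]]].
    { intros x. unfold h. rewrite Hfg. reflexivity. }
    assert (E1 := Huu (indic O1) (indic_cont O1 H1) (fun y => eq_refl) z).
    assert (E2 := Huu (indic O2) (indic_cont O2 H2) (fun y => indic_iff O2 O1 _ _ (iff_sym (Hy y))) z).
    rewrite <- (indic_true O1 z), <- (indic_true O2 z). rewrite E1, E2. tauto. }
  assert (L2 : forall A, Topen A -> exists O, open Q O /\ forall y, O (q y) <-> A (cls y)).
  { intros A HA.
    assert (HAo : open Ytop (fun y => A (cls y))).
    { intros s As. destruct (HA s As) as [N HN]. exists N. intros n Hn. apply HN, Hn. }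
    set (h := indic (fun y : Ytop => A (cls y))).
    destruct (Huniv Sier h HS (indic_cont _ HAo)) as [u [Hu [Huq _]]].
    { intros x. apply indic_iff. reflexivity. }
    exists (fun z => u z = true). split.
    - apply (Hu (fun b => b = true) Sier_open_true).
    - intros y. rewrite Huq. unfold h. rewrite indic_true. reflexivity. }
  assert (Lpb : forall O, open Q O -> Topen (fun s => O (q (s, None)))).
  { intros O HO s Os. destruct (Hq O HO s Os) as [N HN]. exists N. intros n Hn.
    change (O (q (g0 (s, n)))). rewrite <- (Hfg (s, n)). exact (HN n Hn). }
  assert (HVe : forall k, exists O, open Q O /\ forall y, O (q y) <-> k < length (cls y)).
  { intros k. apply (L2 (fun s => k < length s)). intros s Hs. exists 0. intros n _. simpl in *. lia. }
  set (V := fun k => proj1_sig (constructive_indefinite_description _ (HVe k))).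
  assert (HV1 : forall k, open Q (V k)).
  { intros k. exact (proj1 (proj2_sig (constructive_indefinite_description _ (HVe k)))). }
  assert (HV2 : forall k y, V k (q y) <-> k < length (cls y)).
  { intros k. exact (proj2 (proj2_sig (constructive_indefinite_description _ (HVe k)))). }
  destruct (Hb Q PQ V HV1) as [z Hz].
  { intros k O HO [z Oz].
    assert (Hy : exists y, O (q y)).
    { apply NNPP; intros Hn. apply (proj1 (L1 O (fun _ => False) HO (open_empty Q) (fun y => conj (fun H => Hn (ex_intro _ y H)) (fun H => False_ind _ H)) z) Oz). }
    destruct Hy as [y Oy]. rewrite L0 in Oy.
    destruct (descend _ _ (Lpb O HO) Oy (S k)) as [d [Od Hd]].
    exists (q (d, None)). split; [exact Od|]. apply HV2. change (k < length d). lia. }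
  { exists (q (nil, None)). exact I. }
  destruct (classic (exists t, forall O, open Q O -> O (q (t, None)) -> O z)) as [[t Ht]|Hnt].
  - assert (Hcl : forall O, open Q O -> O z -> O (q (t, None))).
    { intros O HO Oz. apply NNPP; intros nOt.
      set (F := fun M : Q -> Prop => exists Aq Bq, open Q Aq /\ open Q Bq /\ Aq (q (t, None)) /\
                  (forall w, ~ (Aq w /\ Bq w)) /\ M = (fun w => Bq w /\ O w)).
      assert (HF : forall M, F M -> open Q M).
      { intros M [Aq [Bq [_ [HBq [_ [_ ->]]]]]]. apply open_inter; assumption. }
      assert (HW := open_union Q F HF).
      assert (Heq := L1 _ O HW HO).
      assert (Hpre : forall y, (exists U, F U /\ U (q y)) <-> O (q y)).
      { intros y. split; [intros [M [[Aq [Bq [_ [_ [_ [_ ->]]]]]] [_ Oy]]]; exact Oy|].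
        intros Oy. rewrite L0 in Oy |- *.
        assert (Hne : cls y <> t) by (intros E; rewrite E in Oy; contradiction).
        destruct (sep_tree t (cls y) (fun e => Hne (eq_sym e))) as [A [B [HA [HB [At [By Hd]]]]]].
        destruct (L2 A HA) as [Aq [HAq HAq']]. destruct (L2 B HB) as [Bq [HBq HBq']].
        exists (fun w => Bq w /\ O w). split; [|split; [apply (HBq' (cls y, None)); exact By|exact Oy]].
        exists Aq, Bq. split; [exact HAq|split; [exact HBq|split; [apply (HAq' (t, None)); exact At|split; [|reflexivity]]]].
        intros w Hw.
        apply (proj1 (L1 (fun w => Aq w /\ Bq w) (fun _ => False) (open_inter Q _ _ HAq HBq) (open_empty Q)
                  (fun y' => conj (fun H => Hd (cls y') (conj (proj1 (HAq' y') (proj1 H)) (proj1 (HBq' y') (proj2 H))))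
                                  (fun H => False_ind _ H)) w) Hw). }
      destruct (proj2 (Heq Hpre z) Oz) as [M [[Aq [Bq [HAq [HBq [Aqt [Hdis ->]]]]]] [Bz _]]].
      apply (Hdis z). split; [apply Ht; [exact HAq|exact Aqt]|exact Bz]. }
    assert (H := Hcl (V (length t)) (HV1 _) (Hz _)).
    apply HV2 in H. change (length t < length t) in H. lia.
  - set (F := fun M : Q -> Prop => open Q M /\ ~ M z).
    assert (HW := open_union Q F (fun M HM => proj1 HM)).
    assert (Heq := L1 _ (fun _ => True) HW (open_full Q)).
    assert (Hpre : forall y, (exists U, F U /\ U (q y)) <-> True).
    { intros y. split; [auto|intros _].
      apply NNPP; intros Hn. apply Hnt. exists (cls y). intros O HO Ot.
      apply NNPP; intros nOz. apply Hn. exists O. split; [split; assumption|]. rewrite L0. exact Ot. }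
    destruct (proj2 (Heq Hpre z) I) as [M [[_ nMz] Mz]]. contradiction.
Qed.

Theorem proposition15p3 :
  lacks_some_coequalizer domain_complete /\ lacks_some_coequalizer LCS_complete.
Proof.
  split; exists X0, Ytop, f0, g0.
  - split; [apply disc_dc|split; [apply Y_dc|split; [apply f0_cont|split; [apply g0_cont|]]]].
    apply no_coeq; [apply Sier_dc|apply dc_baire].
  - split; [apply disc_lcs|split; [apply Y_lcs|split; [apply f0_cont|split; [apply g0_cont|]]]].
    apply no_coeq; [apply Sier_lcs|apply lcs_baire].
Qed.
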